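(* Let $\Lambda=(\alpha,\lambda,f)$ be a twisted $S$-module structure on a semilattice of groups $A$ over an inverse semigroup $S$, and consider the extension $A\overset{i}{\to}A*_\Lambda S\overset{j}{\to}S$. Then $\rho(s)=\alpha(ss^{-1})\delta_s$ is a transversal of $j$, and the twisted $S$-module structure induced by $\rho$ is $(\alpha,\lambda',f)$ where $$\lambda'_s(a)=\lambda_s(a)f(s,s^{-1})^{-1}f(s,\alpha^{-1}(aa^{-1}))f(s\alpha^{-1}(aa^{-1}),s^{-1})\quad(s\in S,\ a\in A).$$
   Context: A semilattice of groups is an inverse semigroup $A$ whose idempotents are central; $A_e=\{a: aa^{-1}=a^{-1}a=e\}$. An endomorphism $\varphi$ of $A$ is relatively invertible if there are $\bar\varphi\in\mathrm{End}\,A$, $e_\varphi\in E(A)$ with $\bar\varphi\varphi(a)=e_\varphi a$, $\varphi\bar\varphi(a)=\varphi(e_\varphi)a$, $e_\varphi$ the identity of $\bar\varphi(A)$, $\varphi(e_\varphi)$ the identity of $\varphi(A)$. A twisted $S$-module structure on $A$ is $(\alpha,\lambda,f)$ with $\alpha:E(S)\to E(A)$ an isomorphism, $s\mapsto\lambda_s$ relatively invertible endomorphisms, $f:S\times S\to A$ with $f(s,t)\in A_{\alpha(stt^{-1}s^{-1})}$, satisfying (i) $\lambda_e(a)=\alpha(e)a$ for $e\in E(S)$; (ii) $\lambda_s(\alpha(e))=\alpha(ses^{-1})$; (iii) $\lambda_s\lambda_t(a)=f(s,t)\lambda_{st}(a)f(s,t)^{-1}$; (iv) $f(se,e)=\alpha(ses^{-1})$,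 $f(e,es)=\alpha(ess^{-1})$; (v) $\lambda_s(f(t,u))f(s,tu)=f(s,t)f(st,u)$. The crossed product $A*_\Lambda S=\{a\delta_s: a\in A,s\in S, aa^{-1}=\alpha(ss^{-1})\}$ with $a\delta_s\cdot b\delta_t=a\lambda_s(b)f(s,t)\delta_{st}$ is an inverse semigroup, and with $i(a)=a\delta_{\alpha^{-1}(aa^{-1})}$, $j(a\delta_s)=s$ it is an extension of $A$ by $S$ (i.e. $i$ is a monomorphism, $j$ an idempotent-separating epimorphism, $i(A)=j^{-1}(E(S))$). A transversal of $j$ is $\rho:S\to A*_\Lambda S$ with $j\circ\rho=\mathrm{id}$ and $\rho(E(S))\subseteq E(A*_\Lambda S)$; the structure it induces is $(\alpha_\rho,\lambda_\rho,f_\rho)$ with $\alpha_\rho=i^{-1}\circ\rho|_{E(S)}$, $(\lambda_\rho)_s(a)=i^{-1}(\rho(s)i(a)\rho(s)^{-1})$, and $f_\rho(s,t)$ the unique element of $A_{\alpha_\rho(stt^{-1}s^{-1})}$ with $\rho(s)\rho(t)=i(f_\rho(s,t))\rho(st)$. *)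

(* Defs.v *)
Record InvSemigroup := {
  car :> Type;
  smul : car -> car -> car;
  sinv : car -> car;
  smul_assoc : forall x y z, smul x (smul y z) = smul (smul x y) z;
  smul_inv_r : forall x, smul (smul x (sinv x)) x = x;
  smul_inv_l : forall x, smul (smul (sinv x) x) (sinv x) = sinv x;
  idem_comm : forall e f, smul e e = e -> smul f f = f -> smul e f = smul f e
}.

Arguments smul {_} _ _.
Arguments sinv {_} _.

Definition idem {S : InvSemigroup} (e : S) : Prop := smul e e = e.

Definition semilattice_of_groups (A : InvSemigroup) : Prop :=
  forall e a : A, idem e -> smul e a = smul a e.

Definition in_part {A : InvSemigroup} (e a : A) : Prop :=
  smul a (sinv a) = e /\ smul (sinv a) a = e.

Definition endo {A : InvSemigroup} (phi : A -> A) : Prop :=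
  forall a b, phi (smul a b) = smul (phi a) (phi b).

Definition rel_invertible {A : InvSemigroup} (phi : A -> A) : Prop :=
  endo phi /\
  exists (phib : A -> A) (e : A),
    endo phib /\ idem e /\
    (forall a, phib (phi a) = smul e a) /\
    (forall a, phi (phib a) = smul (phi e) a) /\
    (exists b, phib b = e) /\
    (forall a, smul e (phib a) = phib a /\ smul (phib a) e = phib a) /\
    (forall a, smul (phi e) (phi a) = phi a /\ smul (phi a) (phi e) = phi a).

(* alpha : E(S) -> E(A) an isomorphism of semilattices, with inverse alphai;
   both are given as total functions whose values off idempotents are
   irrelevant. *)
Definition alpha_iso {S A : InvSemigroup} (alpha : S -> A) (alphai : A -> S)
  : Prop :=
  (forall e : S, idem e -> idem (alpha e) /\ alphai (alpha e) = e) /\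
  (forall a : A, idem a -> idem (alphai a) /\ alpha (alphai a) = a) /\
  (forall e f : S, idem e -> idem f ->
     alpha (smul e f) = smul (alpha e) (alpha f)).

Definition twisted_module {S A : InvSemigroup}
  (alpha : S -> A) (alphai : A -> S) (lam : S -> A -> A) (f : S -> S -> A)
  : Prop :=
  alpha_iso alpha alphai /\
  (forall s, rel_invertible (lam s)) /\
  (forall s t, in_part (alpha (smul (smul s t) (smul (sinv t) (sinv s)))) (f s t)) /\
  (forall (e : S) (a : A), idem e -> lam e a = smul (alpha e) a) /\
  (forall (s e : S), idem e -> lam s (alpha e) = alpha (smul (smul s e) (sinv s))) /\
  (* (iii) *)
  (forall (s t : S) (a : A),
     lam s (lam t a) = smul (smul (f s t) (lam (smul s t) a)) (sinv (f s t))) /\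
  (* (iv) *)
  (forall (s e : S), idem e ->
     f (smul s e) e = alpha (smul (smul s e) (sinv s)) /\
     f e (smul e s) = alpha (smul (smul e s) (sinv s))) /\
  (forall s t u : S,
     smul (lam s (f t u)) (f s (smul t u)) = smul (f s t) (f (smul s t) u)).

(* The crossed product A *_Lambda S, as the set of pairs (a, s) = a delta_s
   with a a^{-1} = alpha(s s^{-1}), with its multiplication. *)
Definition cp_set {S A : InvSemigroup} (alpha : S -> A) (x : A * S) : Prop :=
  smul (fst x) (sinv (fst x)) = alpha (smul (snd x) (sinv (snd x))).

Definition cp_mul {S A : InvSemigroup} (lam : S -> A -> A) (f : S -> S -> A)
  (x y : A * S) : A * S :=
  (smul (smul (fst x) (lam (snd x) (fst y))) (f (snd x) (snd y)),
   smul (snd x) (snd y)).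

Definition cp_i {S A : InvSemigroup} (alphai : A -> S) (a : A) : A * S :=
  (a, alphai (smul a (sinv a))).

Definition cp_j {S A : InvSemigroup} (x : A * S) : S := snd x.

Definition transversal {S A : InvSemigroup} (alpha : S -> A)
  (lam : S -> A -> A) (f : S -> S -> A) (rho : S -> A * S) : Prop :=
  (forall s, cp_set alpha (rho s)) /\
  (forall s, cp_j (rho s) = s) /\
  (forall e : S, idem e -> cp_mul lam f (rho e) (rho e) = rho e).

Definition cp_inverse {S A : InvSemigroup} (alpha : S -> A)
  (lam : S -> A -> A) (f : S -> S -> A) (x y : A * S) : Prop :=
  cp_set alpha y /\
  cp_mul lam f (cp_mul lam f x y) x = x /\
  cp_mul lam f (cp_mul lam f y x) y = y.

(* Main.v *)
Require Import Defs.
Local Infix "**" := smul (at level 40, left associativity).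
Ltac anorm := repeat rewrite smul_assoc.
Ltac regroup t := transitivity t; [solve [anorm; reflexivity] |].

Section IS.
Variable T : InvSemigroup.
Implicit Types a b x y e : T.

Lemma idem_r a : idem (a ** sinv a).
Proof. unfold idem. rewrite smul_assoc, smul_inv_r. reflexivity. Qed.
Lemma idem_l a : idem (sinv a ** a).
Proof. unfold idem. rewrite smul_assoc, smul_inv_l. reflexivity. Qed.

Lemma inv_unique a x : a ** x ** a = a -> x ** a ** x = x -> x = sinv a.
Proof.
  intros H1 H2. set (y := sinv a).
  assert (Ha : a ** y ** a = a) by apply smul_inv_r.
  assert (Hy : y ** a ** y = y) by apply smul_inv_l.
  assert (Ixa : idem (x ** a)) by (unfold idem; regroup (x ** a ** x ** a); rewrite H2; reflexivity).
  assert (Iya : idem (y ** a)) by (unfold idem; regroup (y ** a ** y ** a); rewrite Hy; reflexivity).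
  assert (Iax : idem (a ** x)) by (unfold idem; regroup (a ** x ** a ** x); rewrite H1; reflexivity).
  assert (Iay : idem (a ** y)) by (unfold idem; regroup (a ** y ** a ** y); rewrite Ha; reflexivity).
  transitivity (x ** (a ** y ** a) ** x). { rewrite Ha. symmetry. exact H2. }
  regroup ((x ** a) ** (y ** a) ** x).
  rewrite (idem_comm _ _ _ Ixa Iya).
  regroup (y ** a ** (x ** a ** x)). rewrite H2.
  transitivity (y ** (a ** y ** a) ** x). { rewrite Ha. reflexivity. }
  regroup (y ** ((a ** y) ** (a ** x))). rewrite (idem_comm _ _ _ Iay Iax).
  regroup (y ** (a ** x ** a) ** y). rewrite H1. exact Hy.
Qed.

Lemma inv_inv a : sinv (sinv a) = a.
Proof. symmetry. apply inv_unique; [apply smul_inv_l | apply smul_inv_r]. Qed.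

Lemma inv_idem e : idem e -> sinv e = e.
Proof. intro H. unfold idem in H. symmetry. apply inv_unique; rewrite !H; reflexivity. Qed.

Lemma idem_mul e f : idem e -> idem f -> idem (e ** f).
Proof. intros He Hf. unfold idem in *. regroup (e ** (f ** e) ** f).
  rewrite (idem_comm _ _ _ Hf He). regroup (e ** e ** (f ** f)). rewrite He, Hf. reflexivity. Qed.

Lemma inv_mul a b : sinv (a ** b) = sinv b ** sinv a.
Proof.
  symmetry. apply inv_unique.
  - regroup (a ** ((b ** sinv b) ** (sinv a ** a)) ** b).
    rewrite (idem_comm _ _ _ (idem_r b) (idem_l a)).
    regroup ((a ** sinv a ** a) ** (b ** sinv b ** b)). rewrite !smul_inv_r. reflexivity.
  - regroup (sinv b ** ((sinv a ** a) ** (b ** sinv b)) ** sinv a).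
    rewrite (idem_comm _ _ _ (idem_l a) (idem_r b)).
    regroup ((sinv b ** b ** sinv b) ** (sinv a ** a ** sinv a)). rewrite !smul_inv_l. reflexivity.
Qed.

Lemma idem_conj s e : idem e -> idem (s ** e ** sinv s).
Proof. intro He. unfold idem in *.
  regroup (s ** (e ** (sinv s ** s)) ** e ** sinv s).
  rewrite (idem_comm _ _ _ He (idem_l s)).
  regroup ((s ** sinv s ** s) ** (e ** e) ** sinv s). rewrite smul_inv_r, He. reflexivity. Qed.

Lemma endo_inv (phi : T -> T) a : endo phi -> sinv (phi a) = phi (sinv a).
Proof. intro H. symmetry. apply inv_unique; rewrite <- !H; f_equal;
  [apply smul_inv_r | apply smul_inv_l]. Qed.

Lemma endo_idem (phi : T -> T) e : endo phi -> idem e -> idem (phi e).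
Proof. intros H He. unfold idem in *. rewrite <- H, He. reflexivity. Qed.

Hypothesis HA : semilattice_of_groups T.

Lemma cl_comm a : a ** sinv a = sinv a ** a.
Proof.
  assert (Ea : sinv a ** a ** a = a).
  { rewrite (HA _ a (idem_l a)). regroup (a ** sinv a ** a). apply smul_inv_r. }
  assert (Eb : a ** sinv a ** sinv a = sinv a).
  { rewrite (HA _ (sinv a) (idem_r a)). regroup (sinv a ** a ** sinv a). apply smul_inv_l. }
  assert (E1 : a ** sinv a = (sinv a ** a) ** (a ** sinv a)).
  { symmetry. regroup (sinv a ** a ** a ** sinv a). rewrite Ea. reflexivity. }
  assert (E2 : sinv a ** a = (a ** sinv a) ** (sinv a ** a)).
  { symmetry. regroup (a ** sinv a ** sinv a ** a). rewrite Eb. reflexivity. }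
  rewrite E1. rewrite (idem_comm _ _ _ (idem_l a) (idem_r a)). symmetry. exact E2.
Qed.

Lemma cl_left a e : a ** sinv a = e -> e ** a = a.
Proof. intro H. rewrite <- H. apply smul_inv_r. Qed.
Lemma cl_right a e : a ** sinv a = e -> a ** e = a.
Proof. intro H. rewrite <- (HA _ a). apply cl_left; auto. rewrite <- H. apply idem_r. Qed.

Lemma cl_prod x y e f : x ** sinv x = e -> y ** sinv y = f -> (x ** y) ** sinv (x ** y) = e ** f.
Proof.
  intros Hx Hy. rewrite inv_mul. regroup (x ** (y ** sinv y) ** sinv x).
  rewrite Hy. assert (If : idem f) by (rewrite <- Hy; apply idem_r).
  rewrite <- (HA _ x If). rewrite <- smul_assoc, Hx.
  apply idem_comm; auto. rewrite <- Hx; apply idem_r.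
Qed.
End IS.


Theorem proposition3p19 (S A : InvSemigroup) (HA : semilattice_of_groups A)
  (alpha : S -> A) (alphai : A -> S) (lam : S -> A -> A) (f : S -> S -> A)
  (HLam : twisted_module alpha alphai lam f) :
  let rho := fun s : S => (alpha (smul s (sinv s)), s) in
  let lam' := fun (s : S) (a : A) =>
    smul (smul (smul (lam s a) (sinv (f s (sinv s))))
               (f s (alphai (smul a (sinv a)))))
         (f (smul s (alphai (smul a (sinv a)))) (sinv s)) in
  transversal alpha lam f rho /\
  (forall e : S, idem e -> rho e = cp_i alphai (alpha e)) /\
  (forall (s : S) (a : A) (y : A * S),
     cp_inverse alpha lam f (rho s) y ->
     cp_mul lam f (cp_mul lam f (rho s) (cp_i alphai a)) y
       = cp_i alphai (lam' s a)) /\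
  (forall (s t : S) (g : A),
     in_part (alpha (smul (smul s t) (smul (sinv t) (sinv s)))) g ->
     (cp_mul lam f (rho s) (rho t) = cp_mul lam f (cp_i alphai g) (rho (smul s t))
      <-> g = f s t)).
Proof.
  cbv zeta.
  destruct HLam as [[Hal1 [Hal2 Hal3]] [Hrel [Hf [H1 [H2 [H3 [H4 H5]]]]]]].
  assert (Hend : forall s, endo (lam s)) by (intro s; exact (proj1 (Hrel s))).
  assert (Ial : forall e, idem e -> idem (alpha e)) by (intros e He; exact (proj1 (Hal1 e He))).
  split; [|split; [|split]].
  - unfold transversal; split; [|split].
    + intro s. unfold cp_set; simpl.
      rewrite (inv_idem _ _ (Ial _ (idem_r _ s))). exact (Ial _ (idem_r _ s)).
    + intro s; reflexivity.
    + intros e He. unfold cp_mul; simpl. rewrite (inv_idem _ _ He), He.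
      rewrite (H1 e _ He), (Ial e He).
      destruct (H4 e e He) as [Hf1 _]. rewrite He, (inv_idem _ _ He), He in Hf1.
      rewrite Hf1, !(Ial e He). reflexivity.
  - intros e He. unfold cp_i. rewrite (inv_idem _ _ He), He, (inv_idem _ _ (Ial e He)), (Ial e He),
      (proj2 (Hal1 e He)). reflexivity.
  - intros s a [b t] [Hy1 [Hy2 Hy3]].
    unfold cp_set, cp_mul in Hy1, Hy2, Hy3; simpl in Hy1, Hy2, Hy3.
    injection Hy2 as Hy2a Hy2b. injection Hy3 as Hy3a Hy3b.
    assert (Ht : t = sinv s) by (apply inv_unique; assumption).
    subst t. clear Hy3a Hy3b Hy2b.
    rewrite (inv_inv S s) in Hy1.
    rewrite (H1 _ _ (idem_r _ s)), (Ial _ (idem_r _ s)) in Hy2a.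
    destruct (H4 s _ (idem_r _ s)) as [_ Hf2]. rewrite smul_inv_r in Hf2.
    rewrite Hf2 in Hy2a. clear Hf2.
    assert (Hg : lam s b ** sinv (lam s b) = alpha (s ** sinv s)).
    { rewrite endo_inv by apply Hend. rewrite <- Hend, Hy1, (H2 _ _ (idem_l _ s)).
      f_equal. regroup (s ** sinv s ** s ** sinv s). rewrite smul_inv_r. reflexivity. }
    assert (Hh : f s (sinv s) ** sinv (f s (sinv s)) = alpha (s ** sinv s)).
    { destruct (Hf s (sinv s)) as [Hx _]. rewrite inv_inv, (idem_r _ s) in Hx. exact Hx. }
    assert (Egh : lam s b ** f s (sinv s) = alpha (s ** sinv s)).
    { rewrite <- Hy2a. symmetry.
      regroup (alpha (s ** sinv s) ** lam s b ** (f s (sinv s) ** alpha (s ** sinv s) ** alpha (s ** sinv s))).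
      rewrite !(cl_right _ HA _ _ Hh), (cl_left _ _ _ Hg). reflexivity. }
    assert (Hh' : sinv (f s (sinv s)) ** sinv (sinv (f s (sinv s))) = alpha (s ** sinv s)).
    { rewrite inv_inv, <- cl_comm by exact HA. exact Hh. }
    assert (Egi : lam s b = sinv (f s (sinv s))).
    { transitivity (lam s b ** (f s (sinv s) ** sinv (f s (sinv s)))).
      { rewrite Hh. symmetry. apply (cl_right _ HA _ _ Hg). }
      regroup ((lam s b ** f s (sinv s)) ** sinv (f s (sinv s))). rewrite Egh.
      apply (cl_left _ _ _ Hh'). }
    clear Hy2a Egh.
    unfold cp_i, cp_mul; simpl.
    remember (alphai (a ** sinv a)) as u eqn:Hu.
    assert (Iu : idem u) by (subst u; exact (proj1 (Hal2 _ (idem_r _ a)))).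
    assert (Hau : alpha u = a ** sinv a) by (subst u; exact (proj2 (Hal2 _ (idem_r _ a)))).
    assert (IE : idem (s ** u ** sinv s)) by (apply idem_conj; exact Iu).
    assert (HX : lam s a ** sinv (lam s a) = alpha (s ** u ** sinv s)).
    { rewrite endo_inv by apply Hend. rewrite <- Hend, <- Hau. apply H2; exact Iu. }
    assert (HF : f s u ** sinv (f s u) = alpha (s ** u ** sinv s)).
    { destruct (Hf s u) as [Hx _]. rewrite Hx, (inv_idem _ _ Iu). f_equal.
      regroup (s ** (u ** u) ** sinv s). rewrite Iu. reflexivity. }
    assert (HK : f (s ** u) (sinv s) ** sinv (f (s ** u) (sinv s)) = alpha (s ** u ** sinv s)).
    { destruct (Hf (s ** u) (sinv s)) as [Hx _]. rewrite Hx, inv_inv, inv_mul, (inv_idem _ _ Iu).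
      f_equal. regroup ((s ** u ** sinv s) ** (s ** u ** sinv s)). exact IE. }
    assert (HG : lam (s ** u) b ** sinv (lam (s ** u) b) = alpha (s ** u ** sinv s)).
    { rewrite endo_inv by apply Hend. rewrite <- Hend, Hy1, (H2 _ _ (idem_l _ s)).
      rewrite inv_mul, (inv_idem _ _ Iu). f_equal.
      regroup ((s ** u ** sinv s) ** (s ** u ** sinv s)). exact IE. }
    assert (Hee : alpha (s ** sinv s) ** alpha (s ** u ** sinv s) = alpha (s ** u ** sinv s)).
    { rewrite <- (Hal3 _ _ (idem_r _ s) IE). f_equal.
      regroup ((s ** sinv s ** s) ** u ** sinv s). rewrite smul_inv_r. reflexivity. }
    assert (EFG : f s u ** lam (s ** u) b =
                  alpha (s ** u ** sinv s) ** sinv (f s (sinv s)) ** f s u).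
    { rewrite <- Egi.
      transitivity (f s u ** lam (s ** u) b ** (sinv (f s u) ** f s u)).
      { rewrite <- (cl_comm _ HA), HF. symmetry. regroup (f s u ** (lam (s ** u) b ** alpha (s ** u ** sinv s))).
        rewrite (cl_right _ HA _ _ HG). reflexivity. }
      regroup ((f s u ** lam (s ** u) b ** sinv (f s u)) ** f s u).
      rewrite <- H3, (H1 u b Iu), Hend, (H2 s u Iu). reflexivity. }
    assert (HXe : alpha (s ** sinv s) ** lam s a = lam s a).
    { transitivity (alpha (s ** sinv s) ** (alpha (s ** u ** sinv s) ** lam s a)).
      { rewrite (cl_left _ _ _ HX). reflexivity. }
      regroup ((alpha (s ** sinv s) ** alpha (s ** u ** sinv s)) ** lam s a).
      rewrite Hee. apply (cl_left _ _ _ HX). }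
    f_equal.
    + regroup (alpha (s ** sinv s) ** lam s a ** (f s u ** lam (s ** u) b) ** f (s ** u) (sinv s)).
      rewrite EFG.
      regroup ((alpha (s ** sinv s) ** (lam s a ** alpha (s ** u ** sinv s))) ** sinv (f s (sinv s))
               ** f s u ** f (s ** u) (sinv s)).
      rewrite (cl_right _ HA _ _ HX), HXe. reflexivity.
    + rewrite (cl_prod _ HA _ _ _ _ (cl_prod _ HA _ _ _ _ (cl_prod _ HA _ _ _ _ HX Hh') HF) HK).
      rewrite (idem_comm _ _ _ (Ial _ IE) (Ial _ (idem_r _ s))), Hee, !(Ial _ IE).
      symmetry. exact (proj2 (Hal1 _ IE)).
  - intros s t g Hg. unfold cp_i, cp_mul; simpl.
    rewrite <- inv_mul in Hg. destruct Hg as [Hg1 Hg2].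
    rewrite Hg1, (proj2 (Hal1 _ (idem_r _ (s ** t)))).
    rewrite (H2 s _ (idem_r _ t)).
    rewrite <- (Hal3 _ _ (idem_r _ s) (idem_conj _ _ _ (idem_r _ t))).
    assert (Ew: s ** sinv s ** (s ** (t ** sinv t) ** sinv s) = (s**t) ** sinv(s**t)).
    { rewrite inv_mul. regroup ((s ** sinv s ** s) ** t ** sinv t ** sinv s).
      rewrite smul_inv_r. anorm; reflexivity. }
    rewrite Ew.
    pose proof (Hf s t) as Hst. rewrite <- inv_mul in Hst. destruct Hst as [Hst _].
    rewrite (cl_left _ _ _ Hst).
    rewrite (H1 _ _ (idem_r _ (s ** t))), (Ial _ (idem_r _ (s ** t))).
    destruct (H4 (s ** t) _ (idem_r _ (s ** t))) as [_ Hf2].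
    rewrite smul_inv_r in Hf2. rewrite Hf2, smul_inv_r.
    rewrite !(cl_right _ HA _ _ Hg1).
    split; intro H; [injection H; auto | rewrite H; reflexivity].
Qed.
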